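(* Let $r$ and $k$ be positive integers with $k>r$, let $H$ be the complete graph of order $r+k$, and let $\mathbf{E}=(E_0,E_1,E_2)$ be an ordered partition of $E(H)$. Then (1) if $r<k\le\frac{3r-7}{2}$ and $|E_1|+2|E_2|<\min\left\{\frac12(k+3r-4)(k-r+3),\ (k-r+2)(k+r-1)\right\}$, then $H$ has a good matching for $\mathbf{E}$ of order $r$; and (2) if $k>\frac{3r-7}{2}$ and $|E_1|+2|E_2|<\min\left\{\frac12(k+1)(k+2),\ (k-r+2)(k+r-1)\right\}$, then $H$ has a good matching for $\mathbf{E}$ of order $r$.
   Context: An ordered partition $(E_0,E_1,E_2)$ of a set is a triple of pairwise disjoint (possibly empty) sets with that union. A matching $M$ is a good matching for $\mathbf{E}$ if $M\cap E_2=\emptyset$ and $|M\cap E_1|\le1$; the order of a matching is its number of edges. *)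

(* Defs.v *)
From mathcomp Require Import all_boot.
Set Implicit Arguments. Unset Strict Implicit. Unset Printing Implicit Defensive.

Definition Kedges (n : nat) : {set {set 'I_n}} := [set e : {set 'I_n} | #|e| == 2].

Definition ordered_partition (n : nat) (E0 E1 E2 : {set {set 'I_n}}) : Prop :=
  [/\ [disjoint E0 & E1], [disjoint E0 & E2], [disjoint E1 & E2]
    & E0 :|: E1 :|: E2 = Kedges n].

Definition is_matching (n : nat) (M : {set {set 'I_n}}) : Prop :=
  M \subset Kedges n /\
  forall e f : {set 'I_n}, e \in M -> f \in M -> e != f -> [disjoint e & f].

Definition good_matching (n : nat) (E1 E2 M : {set {set 'I_n}}) : Prop :=
  is_matching M /\ M :&: E2 = set0 /\ #|M :&: E1| <= 1.

(* Main.v *)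
Require Import Defs.
From mathcomp Require Import all_boot zify.
From Stdlib Require Import Classical_Prop.
Set Implicit Arguments. Unset Strict Implicit. Unset Printing Implicit Defensive.


Definition shiftR {T : finType} (R : T -> T -> bool) (i j : T) (x y : T) : bool :=
  if (x == i) && (y != i) && (y != j) then R i y || R j y
  else if (x == j) && (y != i) && (y != j) then R j y && R i y
  else if (y == i) && (x != i) && (x != j) then R x i || R x j
  else if (y == j) && (x != i) && (x != j) then R x j && R x i
  else R x y.

Ltac sh_cases x y i j :=
  rewrite /shiftR;
  case: (x =P i) => ?; case: (x =P j) => ?; case: (y =P i) => ?; case: (y =P j) => ? => //=;
  try (subst; match goal with H : is_true (?a != ?a) |- _ => by rewrite eqxx in H end);
  try subst x; try subst y.


Lemma shift_sym (T : finType) (R : T -> T -> bool) i j :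
  i != j -> (forall x y, R x y = R y x) -> forall x y, shiftR R i j x y = shiftR R i j y x.
Proof.
move=> nij sR x y; rewrite /shiftR.
case: (x =P i) => Exi; case: (x =P j) => Exj; case: (y =P i) => Eyi; case: (y =P j) => Eyj => //=.
all: try (subst; by rewrite eqxx in nij).
all: try subst x; try subst y.
all: by rewrite (sR i) (sR j).
Qed.

Lemma shiftP1 (T : finType) (R : T -> T -> bool) i j y : i != j ->
  shiftR R i j i y + shiftR R i j j y = R i y + R j y.
Proof.
move=> nij; rewrite /shiftR eqxx (negPf nij) (eq_sym j i) (negPf nij) eqxx /=.
case: (y =P i) => [->|_] /=; first by rewrite ?eqxx ?andbF.
case: (y =P j) => [->|_] /=; first by rewrite ?eqxx ?andbF.
by case: (R i y); case: (R j y).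
Qed.

Lemma shiftP2 (T : finType) (R : T -> T -> bool) i j y : i != j ->
  R i y <= shiftR R i j i y.
Proof.
move=> nij; rewrite /shiftR eqxx /=.
case: (y =P i) => [->|_] /=; first by rewrite ?eqxx ?(negPf nij) ?andbF.
case: (y =P j) => [->|_] /=; first by rewrite ?eqxx ?(negPf nij) ?andbF //= (eq_sym j i) (negPf nij).
by case: (R i y); case: (R j y).
Qed.

Lemma shiftP3 (T : finType) (R : T -> T -> bool) i j x y : x != i -> x != j -> y != i -> y != j ->
  shiftR R i j x y = R x y.
Proof. by move=> /negPf a /negPf b /negPf c /negPf d; rewrite /shiftR a b c d. Qed.

Lemma shiftP4 (T : finType) (R : T -> T -> bool) i j x : i != j -> x != i -> x != j ->
  shiftR R i j x i + shiftR R i j x j = R x i + R x j.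
Proof.
move=> nij /negPf a /negPf b; rewrite /shiftR a b eqxx (eq_sym j i) (negPf nij) /= eqxx.
by case: (R x i); case: (R x j).
Qed.

Lemma shift_new (T : finType) (R : T -> T -> bool) i j x y :
  shiftR R i j x y -> ~~ R x y ->
  (x = i /\ y != i /\ y != j /\ R j y /\ ~~ R i y) \/
  (y = i /\ x != i /\ x != j /\ R x j /\ ~~ R x i).
Proof.
rewrite /shiftR.
case: (x =P i) => Hxi; case: (x =P j) => Hxj; case: (y =P i) => Hyi; case: (y =P j) => Hyj => //=;
try (subst; match goal with H : is_true (?a != ?a) |- _ => by rewrite eqxx in H end);
rewrite ?andbF ?andbT /=; try (by move=> ->).
all: repeat match goal with H : ?a = ?b |- _ => subst a end.
all: move=> H1 /negPf H2; rewrite H2 /= in H1; rewrite ?H1 ?H2 //; by [left|right].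
Qed.
Lemma sum_split2 (T : finType) (i j : T) (F : T -> nat) : i != j ->
  \sum_y F y = F i + F j + \sum_(y | (y != i) && (y != j)) F y.
Proof.
move=> nij; rewrite (bigD1 i) //= (bigD1 j) /=; last by rewrite eq_sym.
by rewrite addnA; congr (_ + _); apply: eq_bigl => y; rewrite andbC.
Qed.

Lemma sum_eq2 (T : finType) (i j : T) (F G : T -> nat) : i != j ->
  (forall y, y != i -> y != j -> F y = G y) -> F i + F j = G i + G j ->
  \sum_y F y = \sum_y G y.
Proof.
move=> nij H H2; rewrite (sum_split2 F nij) (sum_split2 G nij) H2; congr (_ + _).
by apply: eq_bigr => y /andP [] ; apply: H.
Qed.

Lemma sum_lt2 (T : finType) (i j : T) (F G : T -> nat) : i != j ->
  (forall y, y != i -> y != j -> F y = G y) -> F i + F j < G i + G j ->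
  \sum_y F y < \sum_y G y.
Proof.
move=> nij H H2; rewrite (sum_split2 F nij) (sum_split2 G nij).
rewrite (eq_bigr (fun y => G y)); first by rewrite ltn_add2r.
by move=> y /andP []; apply: H.
Qed.

Definition symR {T : finType} (R : T -> T -> bool) := forall x y, R x y = R y x.
Definition irrR {T : finType} (R : T -> T -> bool) := forall x, R x x = false.
Definition deg {T : finType} (R : T -> T -> bool) x := \sum_y (R x y : nat).

Lemma shift_irr (T : finType) (R : T -> T -> bool) i j : irrR R -> irrR (shiftR R i j).
Proof.
move=> iR x; rewrite /shiftR.
case: (x =P i) => [->|nxi] /=; first by rewrite ?eqxx ?andbF /= ?andbF.
case: (x =P j) => [->|nxj] /=; by rewrite ?eqxx ?andbF /= ?andbF.
Qed.

Lemma shift_deg_other (T : finType) (R : T -> T -> bool) i j x : i != j -> x != i -> x != j ->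
  deg (shiftR R i j) x = deg R x.
Proof.
move=> nij xi xj; apply: (sum_eq2 nij).
  by move=> y yi yj; rewrite shiftP3.
by rewrite shiftP4.
Qed.

Lemma shift_tot (T : finType) (R : T -> T -> bool) i j : i != j ->
  \sum_x deg (shiftR R i j) x = \sum_x deg R x.
Proof.
move=> nij; apply: (sum_eq2 nij).
  by move=> y yi yj; rewrite shift_deg_other.
rewrite /deg -!big_split /=; apply: eq_bigr => y _.
by rewrite shiftP1.
Qed.

Lemma shift_pot (T : finType) (R : T -> T -> bool) i j (c : T -> nat) y0 : i != j -> c i < c j ->
  y0 != i -> y0 != j -> R j y0 -> ~~ R i y0 ->
  \sum_x c x * deg (shiftR R i j) x < \sum_x c x * deg R x.
Proof.
move=> nij cij y0i y0j Rj Ri; apply: (sum_lt2 nij).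
  by move=> y yi yj; rewrite shift_deg_other.
have Hs : deg (shiftR R i j) i + deg (shiftR R i j) j = deg R i + deg R j.
  by rewrite /deg -!big_split /=; apply: eq_bigr => y _; rewrite shiftP1.
have Hl : deg R i < deg (shiftR R i j) i.
  rewrite /deg (bigD1 y0) //= [X in _ < X](bigD1 y0) //=.
  have -> : shiftR R i j i y0 = true.
    by rewrite /shiftR eqxx y0i y0j /= Rj orbT.
  rewrite (negPf Ri) add0n add1n ltnS; apply: leq_sum => y _.
  exact: shiftP2.
move: Hs Hl; set a := deg _ i; set b := deg _ j; set a' := deg R i; set b' := deg R j.
move=> Hs Hl.
have E : b + (a - a') = b' by lia.
rewrite -E mulnDr.
have : c i * a = c i * a' + c i * (a - a') by rewrite -mulnDr; congr (_ * _); lia.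
move=> ->.
have : c i * (a - a') < c j * (a - a') by rewrite ltn_mul2r cij andbT subn_gt0.
lia.
Qed.


Definition fmatch {T : finType} (R : T -> T -> bool) (t : nat) (f : nat -> bool -> T) :=
  (forall p, p < t -> R (f p false) (f p true)) /\
  (forall p q s s', p < t -> q < t -> f p s = f q s' -> p = q /\ s = s').

Lemma fedge_sym (T : finType) (R : T -> T -> bool) (f : nat -> bool -> T) p s :
  symR R -> R (f p false) (f p true) = R (f p s) (f p (~~ s)).
Proof. by move=> sR; case: s => //=; rewrite sR. Qed.

Lemma shift_transfer (T : finType) (R : T -> T -> bool) i j t f : i != j -> symR R ->
  fmatch (shiftR R i j) t f -> exists f', fmatch R t f'.
Proof.
move=> nij sR [Hed Hinj].
have sS := shift_sym nij sR.
case: (boolP [forall p : 'I_t, R (f p false) (f p true)]) => [/forallP H|].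
  by exists f; split => // p pt; exact: (H (Ordinal pt)).
rewrite negb_forall => /existsP [[p pt] /= nR].
have [s0 [fi [yi [yj [Rjy nRiy]]]]] : exists s0, f p s0 = i /\ f p (~~ s0) != i /\ f p (~~ s0) != j
   /\ R j (f p (~~ s0)) /\ ~~ R i (f p (~~ s0)).
  case: (shift_new (Hed p pt) nR) => [[h1 [h2 [h3 [h4 h5]]]]|[h1 [h2 [h3 [h4 h5]]]]].
    by exists false.
  by exists true; rewrite /= sR h4 -sR h5.
set y := f p (~~ s0) in yi yj Rjy nRiy.
have Hoth : forall q, q < t -> q != p -> R (f q false) (f q true).
  move=> q qt qp; apply/negPn/negP => nRq.
  case: (shift_new (Hed q qt) nRq) => [[h1 _]|[h1 _]].
    by case: (Hinj q p false s0 qt pt); rewrite ?h1 ?fi // => /eqP; rewrite (negPf qp).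
  by case: (Hinj q p true s0 qt pt); rewrite ?h1 ?fi // => /eqP; rewrite (negPf qp).
case: (boolP [exists q : 'I_t, exists s, f q s == j]) => [/existsP [[q2 q2t] /existsP [s2 /eqP fj]]|nj].
  have q2p : q2 != p.
    apply/eqP => E; subst q2; case: (eqVneq s2 s0) => [E|E].
      by subst s2; move: nij; rewrite -fi fj eqxx.
    have : s2 = ~~ s0 by move: E; case: (s2); case: (s0).
    by move=> E'; subst s2; move: yj; rewrite /y fj eqxx.
  set z := f q2 (~~ s2).
  have zi : z != i.
    apply/eqP => E; case: (Hinj q2 p (~~ s2) s0 q2t pt); first by rewrite -/z E fi.
    by move=> E2; move: q2p; rewrite E2 eqxx.
  have zj : z != j.
    apply/eqP => E; case: (Hinj q2 q2 (~~ s2) s2 q2t q2t); first by rewrite -/z E fj.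
    by move=> _; case: (s2).
  have Riz : R i z.
    have := Hed q2 q2t; rewrite (fedge_sym _ _ s2 sS) fj -/z.
    by rewrite /shiftR (eq_sym j i) (negPf nij) eqxx zi zj /= => /andP [].
  pose sw (w : nat * bool) := if w == (p, s0) then (q2, s2) else if w == (q2, s2) then (p, s0) else w.
  have swK : forall w, sw (sw w) = w.
    move=> [a b]; rewrite /sw.
    case: (eqVneq (a, b) (p, s0)) => [->|ne1]; first by rewrite eqxx; case: eqP => // [[E _]]; move: q2p; rewrite E eqxx.
    case: (eqVneq (a, b) (q2, s2)) => [->|ne2]; first by rewrite eqxx.
    by rewrite (negPf ne1) (negPf ne2).
  have swt : forall w, w.1 < t -> (sw w).1 < t.
    by move=> w wt; rewrite /sw; case: ifP => _ //; case: ifP.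
  exists (fun q s => f (sw (q, s)).1 (sw (q, s)).2); split.
    move=> q qt; case: (eqVneq q p) => [->|qp].
      have := fedge_sym (fun q s => f (sw (q, s)).1 (sw (q, s)).2) p s0 sR; rewrite /= => ->.
      rewrite /sw eqxx /=.
      have -> : ((p, ~~ s0) == (p, s0)) = false by rewrite xpair_eqE eqxx /=; case: (s0).
      have -> : ((p, ~~ s0) == (q2, s2)) = false by rewrite xpair_eqE eq_sym (negPf q2p).
      by rewrite fj.
    case: (eqVneq q q2) => [->|qq2].
      have := fedge_sym (fun q s => f (sw (q, s)).1 (sw (q, s)).2) q2 s2 sR; rewrite /= => ->.
      rewrite /sw xpair_eqE (negPf q2p) /= eqxx /=.
      have -> : ((q2, ~~ s2) == (p, s0)) = false by rewrite xpair_eqE (negPf q2p).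
      have -> : ((q2, ~~ s2) == (q2, s2)) = false by rewrite xpair_eqE eqxx /=; case: (s2).
      by rewrite fi.
    rewrite /sw !xpair_eqE (negPf qp) (negPf qq2) /=.
    exact: Hoth.
  move=> a b s s' at_ bt /= E.
  case: (Hinj _ _ _ _ (swt (a, s) at_) (swt (b, s') bt) E) => E1 E2.
  have : sw (a, s) = sw (b, s') by move: E1 E2; case: (sw (a, s)); case: (sw (b, s')) => /= ? ? ? ? -> ->.
  by move/(congr1 sw); rewrite !swK => [[-> ->]].
exists (fun q s => if (q == p) && (s == s0) then j else f q s); split.
  move=> q qt; case: (eqVneq q p) => [->|qp] /=.
    move: Rjy; rewrite /y; case: (s0) => /= Rjy; first by rewrite sR.
    by [].
  exact: Hoth.
have nj' : forall q s, q < t -> f q s != j.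
  move=> q s qt; apply/negP => /eqP E; move: nj; rewrite negb_exists => /forallP /(_ (Ordinal qt)).
  by rewrite negb_exists => /forallP /(_ s); rewrite E eqxx.
move=> q q' s s' qt q't /=.
case: (eqVneq q p) => [->|qp] /=; case: (eqVneq q' p) => [->|q'p] /=;
case: (eqVneq s s0) => [->|ss0] /=; case: (eqVneq s' s0) => [->|s's0] //=.
all: try (move=> E; exfalso; move: (nj' _ _ pt); rewrite ?E ?eqxx //; fail).
all: try (move=> E; exfalso; move: (nj' _ _ qt); rewrite ?E ?eqxx //; fail).
all: try (move=> E; exfalso; move: (nj' _ _ q't); rewrite -?E ?eqxx //; fail).
all: try (by move=> E; apply: Hinj).
all: move=> E; exfalso; match type of E with
 | _ = ?g ?a ?b => (suff Ha : a < t by move: (nj' a b Ha); rewrite -E eqxx); done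
 | ?g ?a ?b = _ => (suff Ha : a < t by move: (nj' a b Ha); rewrite E eqxx); done end.
Qed.


Lemma sum_ord_nat n (H : nat -> nat) : \sum_(x : 'I_n) H x = \sum_(0 <= x < n) H x.
Proof. by rewrite big_mkord. Qed.

Lemma sum_lt_ord n m : m <= n -> \sum_(y : 'I_n) (y < m : nat) = m.
Proof.
move=> mn; rewrite (sum_ord_nat n (fun y => (y < m : nat))) (big_cat_nat (n:=m) (leq0n m) mn) /=.
rewrite (@eq_big_nat _ 0 addn 0 m _ (fun _ => 1)); last by move=> y /andP [_ ->].
rewrite (@eq_big_nat _ 0 addn m n _ (fun _ => 0)); last by move=> y /andP [h _]; rewrite ltnNge h.
by rewrite !sum_nat_const_nat muln1 muln0 addn0 subn0.
Qed.

Lemma deg_le n (R : 'I_n -> 'I_n -> bool) x (P : pred 'I_n) : irrR R ->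
  (forall y, R x y -> P y) -> deg R x + P x <= \sum_y (P y : nat).
Proof.
move=> iR HP; rewrite /deg (bigD1 x) //= [X in _ <= X](bigD1 x) //= iR add0n addnC leq_add2l.
apply: leq_sum => y _; case E: (R x y) => //=; by rewrite (HP _ E).
Qed.

Lemma EG_stable n s (R : 'I_n -> 'I_n -> bool) : 2 * s + 2 <= n -> symR R -> irrR R ->
  (forall i j y : 'I_n, val i < val j -> y != i -> y != j -> R j y -> R i y) ->
  (forall f, ~ fmatch R s.+1 f) ->
  exists i, i <= s /\ \sum_x deg R x <= (2 * s + 1 - i) * (2 * s - i) + 2 * i * (n - (2 * s + 1 - i)).
Proof.
move: R; case: n => [|n] R; first by rewrite addn2.
move=> ns sR iR st nm.
have [i [iS nR]] : exists i, i <= s /\ ~~ R (inord i) (inord (2 * s + 1 - i)).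
  case: (boolP [exists i : 'I_s.+1, ~~ R (inord i) (inord (2 * s + 1 - i))]).
    by move=> /existsP [i Hi]; exists i; split => //; rewrite -ltnS.
  rewrite negb_exists => /forallP Hall; exfalso.
  apply: (nm (fun p b => if b then inord (2 * s + 1 - p) else inord p)); split.
    by move=> p pt /=; have := Hall (Ordinal pt); rewrite negbK.
  have vi : forall k, k < n.+1 -> nat_of_ord (inord k : 'I_n.+1) = k.
    by move=> k kn; rewrite inordK.
  move=> p q b b' pt qt; case: b; case: b' => /= /(congr1 (@nat_of_ord _)); rewrite !vi; try lia; by move=> E; split => //; lia.
exists i; split => //.
set m := 2 * s + 1 - i in nR *.
have eqI : forall (x : 'I_n.+1) k, k < n.+1 -> (x == inord k) = (nat_of_ord x == k).
  move=> x k kn; apply/eqP/eqP => [->|E]; first by rewrite inordK.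
  by apply: val_inj; rewrite /= inordK.
have im : i < m by rewrite /m; lia.
have mN : m < n.+1 by rewrite /m; lia.
have iN : i < n.+1 by lia.
have key : forall x y : 'I_n.+1, R x y -> i <= x -> m <= y -> False.
  move=> x y Rxy ix my.
  have RIy : R (inord i) y.
    case: (eqVneq x (inord i)) => [<-|xI] //.
    apply: (st _ x y) => //=.
    - by move: xI; rewrite eqI // inordK //; lia.
    - by rewrite eqI //; lia.
    - by apply/eqP => E; move: Rxy; rewrite E iR.
  case: (eqVneq y (inord m)) => [E|yM].
    by move: nR; rewrite -E RIy.
  have : R (inord m) (inord i).
    apply: (st _ y) => //=.
    - by move: yM; rewrite eqI // inordK //; lia.
    - by rewrite eqI // inordK //; lia.
    - by rewrite eq_sym eqI //; lia.
    - by rewrite sR.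
  by rewrite sR (negPf nR).
pose h x := if x < i then n else if x < m then m - 1 else i.
have degb : forall x : 'I_n.+1, deg R x <= h x.
  move=> x; rewrite /h.
  case: ifP => xi.
    have := @deg_le n.+1 R x (fun y : 'I_n.+1 => y < n.+1) iR (fun y _ => ltn_ord y).
    by rewrite sum_lt_ord //= (ltn_ord x); lia.
  case: ifP => xm.
    have : deg R x + (x < m) <= \sum_(y : 'I_n.+1) ((y < m) : nat).
      apply: (@deg_le n.+1 R x (fun y : 'I_n.+1 => y < m)) => // y Rxy; rewrite ltnNge; apply/negP => my.
      by apply: (key x y) => //; rewrite leqNgt xi.
    by rewrite sum_lt_ord ?xm; [lia|lia].
  have : deg R x + (x < i) <= \sum_(y : 'I_n.+1) ((y < i) : nat).
    apply: (@deg_le n.+1 R x (fun y : 'I_n.+1 => y < i)) => // y Rxy; rewrite ltnNge; apply/negP => iy.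
    by apply: (key y x) => //; [rewrite sR | rewrite leqNgt xm].
  by rewrite sum_lt_ord ?xi; [lia|lia].
apply: (@leq_trans (\sum_(x : 'I_n.+1) h x)); first by apply: leq_sum => x _; exact: degb.
rewrite (sum_ord_nat n.+1 h) (big_cat_nat (n:=i) (leq0n i) (ltnW iN)) /=.
rewrite (big_cat_nat (n:=m) (ltnW im) (ltnW mN)) /=.
rewrite (@eq_big_nat _ 0 addn 0 i _ (fun _ => n)); last by move=> y /andP [_ yi]; rewrite /h yi.
rewrite (@eq_big_nat _ 0 addn i m _ (fun _ => m - 1)); last first.
  by move=> y /andP [iy ym]; rewrite /h ltnNge iy /= ym.
rewrite (@eq_big_nat _ 0 addn m n.+1 _ (fun _ => i)); last first.
  by move=> y /andP [my _]; rewrite /h !ltnNge my /=; have -> : i <= y by lia.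
rewrite !sum_nat_const_nat.
have -> : 2 * s - i = m - 1 by rewrite /m; lia.
nia.
Qed.


Lemma EG n s (R : 'I_n -> 'I_n -> bool) : 2 * s + 2 <= n -> symR R -> irrR R ->
  (forall f, ~ fmatch R s.+1 f) ->
  exists i, i <= s /\ \sum_x deg R x <= (2 * s + 1 - i) * (2 * s - i) + 2 * i * (n - (2 * s + 1 - i)).
Proof.
move=> ns.
move: (leqnn (\sum_(x : 'I_n) val x * deg R x)).
move: {2}(\sum_(x : 'I_n) val x * deg R x) => c.
elim: c R => [|c IH] R Hc sR iR nm.
all: case: (boolP [exists i : 'I_n, exists j : 'I_n, exists y : 'I_n,
   [&& val i < val j, y != i, y != j, R j y & ~~ R i y]]).
- move=> /existsP [i /existsP [j /existsP [y /and5P [ij yi yj Rj Ri]]]].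
  have nij : i != j by apply/eqP => E; move: ij; rewrite E ltnn.
  have := shift_pot (c := val) nij ij yi yj Rj Ri => H.
  by have := leq_trans H Hc.
- rewrite negb_exists => /forallP st.
  apply: EG_stable => // i j y ij yi yj Rj; apply/negPn/negP => Ri.
  move: (st i); rewrite negb_exists => /forallP /(_ j); rewrite negb_exists => /forallP /(_ y).
  by rewrite ij yi yj Rj Ri.
- move=> /existsP [i /existsP [j /existsP [y /and5P [ij yi yj Rj Ri]]]].
  have nij : i != j by apply/eqP => E; move: ij; rewrite E ltnn.
  have := shift_pot (c := val) nij ij yi yj Rj Ri => Hp.
  have [i0 [Hi0 Hb]] := IH (shiftR R i j) (ltac:(rewrite -ltnS; exact: (leq_trans Hp Hc))) (shift_sym nij sR) (shift_irr i j iR)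
     (fun f Hf => let: ex_intro f' Hf' := shift_transfer nij sR Hf in nm f' Hf').
  by exists i0; split => //; rewrite -(shift_tot R nij).
- rewrite negb_exists => /forallP st.
  apply: EG_stable => // i j y ij yi yj Rj; apply/negPn/negP => Ri.
  move: (st i); rewrite negb_exists => /forallP /(_ j); rewrite negb_exists => /forallP /(_ y).
  by rewrite ij yi yj Rj Ri.
Qed.


Definition injf {T : finType} (t : nat) (f : nat -> bool -> T) :=
  forall p q s s', p < t -> q < t -> f p s = f q s' -> p = q /\ s = s'.

Lemma part_sum n (E0 E1 E2 : {set {set 'I_n}}) (x y : 'I_n) : ordered_partition E0 E1 E2 ->
  ([set x; y] \in E0) + ([set x; y] \in E1) + ([set x; y] \in E2) = (x != y).
Proof.
case=> d01 d02 d12 U.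
have HK : ([set x; y] \in Kedges n) = (x != y) by rewrite /Kedges inE cards2; case: (x != y).
rewrite -HK -U !inE.
have n01 := disjointFr d01; have n02 := disjointFr d02; have n12 := disjointFr d12.
case E0m: ([set x; y] \in E0); case E1m: ([set x; y] \in E1); case E2m: ([set x; y] \in E2) => //=.
- by move: (n01 _ E0m); rewrite E1m.
- by move: (n01 _ E0m); rewrite E1m.
- by move: (n02 _ E0m); rewrite E2m.
- by move: (n12 _ E1m); rewrite E2m.
Qed.

Lemma good_of_f n (E0 E1 E2 : {set {set 'I_n}}) t (f : nat -> bool -> 'I_n) (p0 : nat) :
  ordered_partition E0 E1 E2 -> injf t f ->
  (forall p, p < t -> ([set f p false; f p true] \in E0) \/ (p = p0 /\ [set f p false; f p true] \in E1)) ->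
  exists M, good_matching E1 E2 M /\ #|M| = t.
Proof.
move=> HP inj He.
pose ed (p : 'I_t) := [set f p false; f p true].
have ne : forall p : 'I_t, f p false != f p true.
  by move=> p; apply/eqP => E; case: (inj p p false true (ltn_ord p) (ltn_ord p) E).
have mem : forall (p : 'I_t) x, x \in ed p -> exists s, x = f p s.
  by move=> p x; rewrite !inE => /orP [/eqP->|/eqP->]; [exists false|exists true].
have edinj : injective ed.
  move=> p q E; have : f p false \in ed q by rewrite -E !inE eqxx.
  case/mem => s Es; case: (inj p q false s (ltn_ord p) (ltn_ord q) Es) => pq _.
  by apply: val_inj.
exists [set ed p | p : 'I_t]; split; last by rewrite card_imset // card_ord.
split; [split|split].
- apply/subsetP => e /imsetP [p _ ->]; by rewrite /Kedges inE cards2 ne.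
- move=> e g /imsetP [p _ ->] /imsetP [q _ ->] npq.
  have pq : p != q by apply: contra npq => /eqP ->.
  apply/pred0P => x /=; apply/negP => /andP [/mem [s Es] /mem [s' Es']].
  case: (inj p q s s' (ltn_ord p) (ltn_ord q)); first by rewrite -Es -Es'.
  by move=> E _; move: pq; rewrite -(inj_eq val_inj) /= E eqxx.
- apply/setP => e; rewrite !inE; apply/negP => /andP [/imsetP [p _ ->] H2].
  case: HP => _ d02 d12 _.
  case: (He p (ltn_ord p)) => [H0|[_ H1]].
    by move: (disjointFr d02 H0); rewrite H2.
  by move: (disjointFr d12 H1); rewrite H2.
- have : [set ed p | p : 'I_t] :&: E1 \subset [set [set f p0 false; f p0 true]].
    apply/subsetP => e; rewrite !inE => /andP [/imsetP [p _ ->] H1].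
    case: HP => d01 _ _ _.
    case: (He p (ltn_ord p)) => [H0|[pp0 _]].
      by move: (disjointFr d01 H0); rewrite H1.
    by rewrite /ed pp0.
  by move/subset_leq_card; rewrite cards1.
Qed.

Lemma sum_bool_card (T : finType) (b : pred T) : \sum_(p : T) (b p : nat) = #|[set p | b p]|.
Proof.
rewrite -sum1_card [RHS]big_mkcond /=; apply: eq_bigr => p _; rewrite inE; by case: (b p).
Qed.

Lemma pairs_le n (E : {set {set 'I_n}}) : E \subset Kedges n ->
  \sum_(x : 'I_n) \sum_(y : 'I_n) (([set x; y] \in E) : nat) <= 2 * #|E|.
Proof.
move=> EK.
have H1 : forall x y : 'I_n, (([set x; y] \in E) : nat) =
   ((x < y) && ([set x; y] \in E)) + ((y < x) && ([set y; x] \in E)).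
  move=> x y; rewrite [[set y; x]]setUC.
  case: (ltngtP x y) => [xy|yx|xy] /=; rewrite ?addn0 //.
  have -> : x = y by apply: val_inj.
  rewrite setUid; case E1: ([set y] \in E) => //.
  by move: (subsetP EK _ E1); rewrite /Kedges inE cards1.
rewrite (eq_bigr (fun x : 'I_n => \sum_(y : 'I_n) (((x < y) && ([set x; y] \in E)) + ((y < x) && ([set y; x] \in E)) : nat)));
  last by move=> x _; apply: eq_bigr => y _; rewrite H1.
under eq_bigr => x _ do rewrite big_split /=.
rewrite big_split /= [X in _ + X <= _](exchange_big) /= addnn -mul2n.
rewrite leq_pmul2l // pair_big /=.
rewrite (sum_bool_card (fun p : 'I_n * 'I_n => (p.1 < p.2) && ([set p.1; p.2] \in E))).
set Q := [set p | _].
rewrite -(card_in_imset (f := fun p : 'I_n * 'I_n => [set p.1; p.2])).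
  apply: subset_leq_card; apply/subsetP => e /imsetP [p]; rewrite inE => /andP [_ H] ->; exact: H.
move=> [a b] [c d]; rewrite !inE /= => /andP [ab _] /andP [cd _] Epq.
have ac : a \in [set c; d] by rewrite -Epq !inE eqxx.
have bc : b \in [set c; d] by rewrite -Epq !inE eqxx orbT.
have ca : c \in [set a; b] by rewrite Epq !inE eqxx.
move: ac bc ca; rewrite !inE -!(inj_eq val_inj) /= => ac bc ca.
have [E1 E2] : nat_of_ord a = c /\ nat_of_ord b = d by lia.
by congr (_, _); apply: val_inj.
Qed.


Definition ext {T : Type} (t : nat) (f : nat -> bool -> T) (u v : T) :=
  fun q s => if q == t then (if s then v else u) else f q s.
Definition upd {T : Type} (f : nat -> bool -> T) (p : nat) (s0 : bool) (x : T) :=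
  fun q s => if (q == p) && (s == s0) then x else f q s.

Lemma inj_ext (T : finType) t (f : nat -> bool -> T) u v : injf t f ->
  (forall q s, q < t -> f q s != u) -> (forall q s, q < t -> f q s != v) -> u != v ->
  injf t.+1 (ext t f u v).
Proof.
move=> inj nu nv uv p q s s'; rewrite !ltnS /ext => pt qt.
case: (eqVneq p t) => [->|pt'] ; case: (eqVneq q t) => [->|qt'] //=.
- by case: s; case: s' => // E; [move: uv; rewrite E eqxx | move: uv; rewrite E eqxx].
- have qlt : q < t by rewrite ltn_neqAle qt' qt.
  by case: s => E; [move: (nv q s' qlt) | move: (nu q s' qlt)]; rewrite E eqxx.
- have plt : p < t by rewrite ltn_neqAle pt' pt.
  by case: s' => E; [move: (nv p s plt) | move: (nu p s plt)]; rewrite E eqxx.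
- have qlt : q < t by rewrite ltn_neqAle qt' qt.
  have plt : p < t by rewrite ltn_neqAle pt' pt.
  exact: inj.
Qed.

Lemma inj_upd (T : finType) t (f : nat -> bool -> T) p s0 x : injf t f ->
  (forall q s, q < t -> f q s != x) -> injf t (upd f p s0 x).
Proof.
move=> inj nx q q' s s' qt q't; rewrite /upd.
case: (eqVneq q p) => [qp|qp]; case: (eqVneq q' p) => [q'p|q'p];
case: (eqVneq s s0) => [ss0|ss0]; case: (eqVneq s' s0) => [s's0|s's0]; rewrite ?qp ?q'p ?ss0 ?s's0 ?eqxx ?andbT ?andbF //=.
all: try subst q; try subst q'; try subst s; try subst s'; try (by split).
all: try (by apply: inj).
all: move=> E; exfalso; match type of E with
 | _ = ?g ?a ?b => (suff Ha : a < t by move: (nx a b Ha); rewrite -E eqxx); done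
 | ?g ?a ?b = _ => (suff Ha : a < t by move: (nx a b Ha); rewrite E eqxx); done end.
Qed.

Lemma inner_D1 (T : finType) (U : {set T}) (x : T) (F : T -> nat) c : x \in U ->
  (forall y, y \in U -> y != x -> c <= F y) -> F x + c * (#|U| - 1) <= \sum_(y in U) F y.
Proof.
move=> xU H; rewrite (bigD1 x) //= leq_add2l.
have -> : #|U| - 1 = #|[predD1 U & x]|.
  by rewrite (cardD1 x U) xU add1n subn1.
rewrite mulnC -sum_nat_const.
rewrite (eq_bigl (fun y => (y \in U) && (y != x))); last by move=> y; rewrite !inE andbC.
by apply: leq_sum => y /andP [yU yx]; exact: H.
Qed.

Lemma avg_lemma (T : finType) (U : {set T}) (g h : T -> nat) : 1 < #|U| ->
  (forall x y, x \in U -> y \in U -> x != y -> 2 <= g x + h y) ->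
  2 * #|U| <= \sum_(x in U) (g x + h x).
Proof.
move=> U1 H.
have E1 : \sum_(x in U) \sum_(y in U) (g x + h y) = #|U| * \sum_(x in U) (g x + h x).
  rewrite (eq_bigr (fun x => #|U| * g x + \sum_(y in U) h y)); last first.
    by move=> x _; rewrite big_split /= sum_nat_const mulnC.
  rewrite big_split /= sum_nat_const -big_distrr /= [X in _ = _ * X]big_split /= mulnDr mulnC //.
have E2 : \sum_(x in U) ((g x + h x) + 2 * (#|U| - 1)) <= \sum_(x in U) \sum_(y in U) (g x + h y).
  apply: leq_sum => x xU; apply: (inner_D1 (F := fun y => g x + h y)) => // y yU yx.
  by apply: H => //; rewrite eq_sym.
move: E2; rewrite big_split /= sum_nat_const E1.
set S := \sum_(x in U) _; set u := #|U|.
move=> E2.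
have : (u - 1) * (2 * u) <= (u - 1) * S by nia.
rewrite leq_pmul2l //; lia.
Qed.

Lemma sumC_lemma n t (f : nat -> bool -> 'I_n) (U : {set 'I_n}) (F : 'I_n -> nat) : injf t f ->
  U = [set x | [forall p : 'I_t, (f p false != x) && (f p true != x)]] ->
  \sum_(y in ~: U) F y = \sum_(p : 'I_t) (F (f p false) + F (f p true)) /\ #|~: U| = 2 * t.
Proof.
move=> inj ->.
have HC : ~: [set x | [forall p : 'I_t, (f p false != x) && (f p true != x)]] =
   [set f (val ps.1) ps.2 | ps : 'I_t * bool].
  apply/setP => x; rewrite !inE negb_forall; apply/existsP/imsetP.
    move=> [p]; rewrite negb_and !negbK => /orP [/eqP <-|/eqP <-].
      by exists (p, false).
    by exists (p, true).
  move=> [[p s] _ ->]; exists p; by case: s; rewrite /= eqxx ?andbF.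
have injC : injective (fun ps : 'I_t * bool => f (val ps.1) ps.2).
  move=> [p s] [q s'] /= E; case: (inj p q s s' (ltn_ord p) (ltn_ord q) E) => E1 ->.
  by congr (_, _); apply: val_inj.
rewrite HC; split.
  rewrite (big_imset _ (in2W injC)) /=.
  have := pair_big xpredT xpredT (fun (p : 'I_t) (s : bool) => F (f p s)).
  rewrite /= => E; rewrite -E; apply: eq_bigr => p _; by rewrite big_bool addnC.
rewrite card_imset //.
by rewrite card_prod card_ord card_bool muln2 mul2n.
Qed.

Lemma case_i n t (E0 E1 E2 : {set {set 'I_n}}) (f : nat -> bool -> 'I_n) :
  ordered_partition E0 E1 E2 -> 2 * t + 2 <= n ->
  fmatch (fun x y => [set x; y] \in E0) t f ->
  (forall g p0, injf t.+1 g -> (forall p, p < t.+1 -> ([set g p false; g p true] \in E0) \/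
        (p = p0 /\ [set g p false; g p true] \in E1)) -> False) ->
  2 * (n - 2 * t) * (n - 1) <=
  \sum_(x : 'I_n) \sum_(y : 'I_n) (([set x; y] \in E1) + 2 * ([set x; y] \in E2)).
Proof.
move=> HP nt [fed finj] nogood.
set w := fun x y : 'I_n => (([set x; y] \in E1) + 2 * ([set x; y] \in E2)).
have wsym : forall x y, w x y = w y x by move=> x y; rewrite /w setUC.
set U := [set x | [forall p : 'I_t, (f p false != x) && (f p true != x)]].
have uIn : forall u, u \in U -> forall q s, q < t -> f q s != u.
  move=> u; rewrite inE => /forallP H q s qt; move: (H (Ordinal qt)) => /andP [] /=.
  by case: s.
have L1 : forall u v, u \in U -> v \in U -> u != v -> [set u; v] \in E2.
  move=> u v uU vU uv; apply/negPn/negP => nE2.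
  have := part_sum u v HP; rewrite uv (negPf nE2) addn0 => Hs.
  apply: (nogood (ext t f u v) t).
    apply: inj_ext => //; [exact: uIn | exact: uIn].
  move=> p; rewrite ltnS /ext; case: (eqVneq p t) => [->|pt] pt' /=.
    case: ([set u; v] \in E0) Hs => /= Hs; first by left.
    by right; split => //; move: Hs; case: ([set u; v] \in E1).
  by left; apply: fed; rewrite ltn_neqAle pt pt'.
have L2 : forall u v p, u \in U -> v \in U -> u != v -> p < t ->
    2 <= w u (f p false) + w v (f p true).
  move=> u v p uU vU uv pt; rewrite leqNgt; apply/negP => Hlt.
  have ua : u != f p false by rewrite eq_sym; apply: uIn.
  have vb : v != f p true by rewrite eq_sym; apply: uIn.
  have := part_sum u (f p false) HP; have := part_sum v (f p true) HP.
  rewrite ua vb; move: Hlt; rewrite /w.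
  set a0 := [set u; _] \in E0; set a1 := [set u; _] \in E1; set a2 := [set u; _] \in E2.
  set b0 := [set v; _] \in E0; set b1 := [set v; _] \in E1; set b2 := [set v; _] \in E2.
  move=> Hlt Hb Ha.
  apply: (nogood (ext t (upd f p true u) (f p true) v) (if a1 then p else t)).
    apply: inj_ext.
    - by apply: inj_upd => //; exact: uIn.
    - move=> q s qt; rewrite /upd; case: ifP => [_|]; first by rewrite eq_sym; apply: uIn.
      move=> H; apply/eqP => E; case: (finj q p s true qt pt E) => qp sq.
      by move: H; rewrite qp sq !eqxx.
    - move=> q s qt; rewrite /upd; case: ifP => [_|_]; first by [].
      by apply: uIn.
    - by rewrite eq_sym.
  move=> q; rewrite ltnS /ext /upd; case: (eqVneq q t) => [->|qt] qt' /=.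
    rewrite setUC -/b0 -/b1.
    by move: Hlt Hb Ha; case: a1; case: b0; case: b1; case: b2; case: a2 => //=; auto.
  have qlt : q < t by rewrite ltn_neqAle qt qt'.
  case: (eqVneq q p) => [->|qp] /=.
    rewrite setUC -/a0 -/a1.
    by move: Hlt Hb Ha; case: a1; case: a0; case: b1; case: b2; case: a2 => //=; auto.
  by left; apply: fed.
have split_U : forall F : 'I_n -> nat, \sum_x F x = \sum_(x in U) F x + \sum_(x in ~: U) F x.
  move=> F; rewrite (bigID (fun x => x \in U)) /=.
  by congr (_ + _); apply: eq_bigl => x; rewrite ?in_setC.
have cardU : #|U| = n - 2 * t.
  have := cardsC U; rewrite card_ord.
  by case: (sumC_lemma (fun _ => 0) finj (erefl U)) => _ ->; lia.
have U1 : 1 < #|U| by rewrite cardU; lia.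
have A : 2 * (#|U| * (#|U| - 1)) <= \sum_(x in U) \sum_(y in U) w x y.
  rewrite mulnA [2 * _]mulnC -mulnA -sum_nat_const; apply: leq_sum => x xU.
  have := @inner_D1 _ U x (w x) 2 xU; rewrite mulnC => H.
  apply: leq_trans (H _); first by apply: leq_addl.
  move=> y yU yx; have := L1 x y xU yU; rewrite eq_sym => /(_ yx) E.
  by rewrite /w E; lia.
have B : t * (2 * #|U|) <= \sum_(x in U) \sum_(y in ~: U) w x y.
  rewrite (eq_bigr (fun x => \sum_(p : 'I_t) (w x (f p false) + w x (f p true)))); last first.
    by move=> x _; case: (sumC_lemma (w x) finj (erefl U)).
  rewrite exchange_big /=.
  have -> : t * (2 * #|U|) = \sum_(p : 'I_t) (2 * #|U|) by rewrite sum_nat_const card_ord.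
  apply: leq_sum => p _; apply: avg_lemma => // x y xU yU xy.
  exact: L2.
have C : \sum_(x in U) \sum_(y in U) w x y + 2 * \sum_(x in U) \sum_(y in ~: U) w x y <=
    \sum_x \sum_y w x y.
  have -> : \sum_x \sum_y w x y = \sum_(x in U) (\sum_(y in U) w x y + \sum_(y in ~: U) w x y)
      + \sum_(x in ~: U) \sum_y w x y.
    rewrite (split_U (fun x => \sum_y w x y)); congr (_ + _).
    by apply: eq_bigr => x _; apply: (split_U (fun y => w x y)).
  rewrite big_split /= mul2n -addnn -[X in _ <= X]addnA !leq_add2l.
  rewrite exchange_big /=.
  apply: leq_sum => x _; rewrite (split_U (w x)).
  apply: leq_trans (leq_addr _ _); rewrite leq_eqVlt; apply/orP; left; apply/eqP.
  by apply: eq_bigr => y _; apply: wsym.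
move: A B C; rewrite cardU.
set S := \sum_x _; set a := \sum_(x in U) _; set b := \sum_(x in U) _.
nia.
Qed.


Lemma arA i j e : i + j < 2 * e + 7 ->
  (i + j + 4 + e) * (i + j + 5 + e) + ((i + 2 * j + 1) * (i + 2 * j) + 2 * i * (i + 4 + e)) <=
  (2 * (i + j) + 5 + e) * (2 * (i + j) + 4 + e).
Proof. nia. Qed.
Lemma arC i j e : 2 * e + 7 <= i + j ->
  (4 * (i + j) + 5 + e) * (e + 4) + ((i + 2 * j + 1) * (i + 2 * j) + 2 * i * (i + 4 + e)) <=
  (2 * (i + j) + 5 + e) * (2 * (i + j) + 4 + e).
Proof. nia. Qed.

Lemma final_arith r k i W D0 : 2 <= r -> r < k -> i <= r - 2 ->
  D0 <= (2 * (r - 2) + 1 - i) * (2 * (r - 2) - i) + 2 * i * ((r + k) - (2 * (r - 2) + 1 - i)) ->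
  (r + k) * (r + k - 1) <= 2 * W + D0 ->
  (2 * k + 7 <= 3 * r -> (k + 3 * r - 4) * (k - r + 3) <= 2 * W) /\
  (3 * r < 2 * k + 7 -> (k + 1) * (k + 2) <= 2 * W).
Proof.
move=> r2 rk ir HD HN.
have [j Ej] : exists j, r = i + j + 2 by exists (r - 2 - i); lia.
have [e Ee] : exists e, k = i + j + 3 + e by exists (k - r - 1); lia.
subst r k.
have E1 : 2 * (i + j + 2 - 2) + 1 - i = i + 2 * j + 1 by lia.
have E2 : 2 * (i + j + 2 - 2) - i = i + 2 * j by lia.
have E3 : i + j + 2 + (i + j + 3 + e) - (i + 2 * j + 1) = i + 4 + e by lia.
have E4 : i + j + 2 + (i + j + 3 + e) = 2 * (i + j) + 5 + e by lia.
have E5 : 2 * (i + j) + 5 + e - 1 = 2 * (i + j) + 4 + e by lia.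
rewrite E1 E2 E3 in HD; rewrite E4 E5 in HN.
split => H.
  have E6 : i + j + 3 + e + 3 * (i + j + 2) - 4 = 4 * (i + j) + 5 + e by lia.
  have E7 : i + j + 3 + e - (i + j + 2) + 3 = e + 4 by lia.
  rewrite E6 E7.
  have := arC (ltac:(lia) : 2 * e + 7 <= i + j).
  move: HD HN; set a := (_ * _ + _); set b := (_ * _); set c := (_ * _); lia.
have E6 : i + j + 3 + e + 1 = i + j + 4 + e by lia.
have E7 : i + j + 3 + e + 2 = i + j + 5 + e by lia.
rewrite E6 E7.
have := arA (ltac:(lia) : i + j < 2 * e + 7).
move: HD HN; set a := (_ * _ + _); set b := (_ * _); set c := (_ * _); lia.
Qed.

Lemma sum_neq n (x : 'I_n) : \sum_(y : 'I_n) ((x != y) : nat) = n - 1.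
Proof.
rewrite sum_bool_card.
have -> : [set y | x != y] = [set~ x] by apply/setP => y; rewrite !inE eq_sym.
by rewrite cardsC1 card_ord subn1.
Qed.

Theorem lemma16 (r k : nat) (E0 E1 E2 : {set {set 'I_(r + k)}}) :
  0 < r -> r < k ->
  ordered_partition E0 E1 E2 ->
  ((2 * k + 7 <= 3 * r ->
    2 * (#|E1| + 2 * #|E2|) < (k + 3 * r - 4) * (k - r + 3) ->
    #|E1| + 2 * #|E2| < (k - r + 2) * (k + r - 1) ->
    exists M, good_matching E1 E2 M /\ #|M| = r)
  /\
   (3 * r < 2 * k + 7 ->
    2 * (#|E1| + 2 * #|E2|) < (k + 1) * (k + 2) ->
    #|E1| + 2 * #|E2| < (k - r + 2) * (k + r - 1) ->
    exists M, good_matching E1 E2 M /\ #|M| = r)).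
Proof.
move=> r0 rk HP.
have HP' := HP; case: HP' => d01 d02 d12 HU.
have sub : forall E, E \subset E0 :|: E1 :|: E2 -> E \subset Kedges (r + k) by move=> E; rewrite HU.
have K1 : E1 \subset Kedges (r + k) by apply: sub; apply/subsetP => e he; rewrite !inE he orbT.
have K2 : E2 \subset Kedges (r + k) by apply: sub; apply/subsetP => e he; rewrite !inE he orbT.
set W := #|E1| + 2 * #|E2|.
set D := fun (E : {set {set 'I_(r + k)}}) => \sum_(x : 'I_(r + k)) \sum_(y : 'I_(r + k)) (([set x; y] \in E) : nat).
have D1 : D E1 <= 2 * #|E1| by apply: pairs_le.
have D2 : D E2 <= 2 * #|E2| by apply: pairs_le.
have Dsum : D E0 + D E1 + D E2 = (r + k) * (r + k - 1).
  rewrite /D -!big_split /=.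
  rewrite (eq_bigr (fun x : 'I_(r + k) => r + k - 1)); first by rewrite sum_nat_const card_ord.
  move=> x _; rewrite -!big_split /= -(sum_neq x); apply: eq_bigr => y _.
  by rewrite part_sum.
have Dw : \sum_(x : 'I_(r + k)) \sum_(y : 'I_(r + k)) (([set x; y] \in E1) + 2 * ([set x; y] \in E2)) = D E1 + 2 * D E2.
  rewrite /D big_distrr /= -big_split /=; apply: eq_bigr => x _.
  by rewrite big_distrr /= -big_split.
have core : ~ (exists M, good_matching E1 E2 M /\ #|M| = r) ->
   (k - r + 2) * (k + r - 1) <= W \/
   (2 <= r /\ exists i, i <= r - 2 /\ D E0 <= (2 * (r - 2) + 1 - i) * (2 * (r - 2) - i) +
        2 * i * ((r + k) - (2 * (r - 2) + 1 - i))).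
  move=> nog.
  have nogood : forall g p0, injf (r - 1).+1 g ->
     (forall p, p < (r - 1).+1 -> ([set g p false; g p true] \in E0) \/
        (p = p0 /\ [set g p false; g p true] \in E1)) -> False.
    move=> g p0 ig He; apply: nog.
    have := good_of_f HP ig He; have -> : (r - 1).+1 = r by lia.
    done.
  case: (classic (exists f, fmatch (fun x y => [set x; y] \in E0) (r - 1) f)) => [[f Hf]|nf].
    left.
    have := case_i HP (ltac:(lia) : 2 * (r - 1) + 2 <= r + k) Hf nogood.
    rewrite Dw.
    have -> : r + k - 2 * (r - 1) = k - r + 2 by lia.
    have -> : r + k - 1 = k + r - 1 by lia.
    move=> H; rewrite -(leq_pmul2l (ltn0Sn 1)) mulnA; apply: (leq_trans H).
    rewrite /W; lia.
  right.
  have r2 : 2 <= r.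
    rewrite ltnNge; apply/negP => r1; apply: nf.
    have x0 : 0 < r + k by lia.
    exists (fun _ _ => Ordinal x0).
    have -> : r - 1 = 0 by lia.
    by split => p //.
  split => //.
  have sym0 : symR (fun x y : 'I_(r + k) => [set x; y] \in E0) by move=> x y; rewrite /= setUC.
  have irr0 : irrR (fun x y : 'I_(r + k) => [set x; y] \in E0).
    move=> x /=; rewrite setUid; apply/negP => H.
    have K0 : E0 \subset Kedges (r + k) by apply: sub; apply/subsetP => e he; rewrite !inE he.
    by move: (subsetP K0 _ H); rewrite inE cards1.
  have nm0 : forall f, ~ fmatch (fun x y : 'I_(r + k) => [set x; y] \in E0) (r - 2).+1 f.
    have -> : (r - 2).+1 = r - 1 by lia.
    by move=> f Hf; apply: nf; exists f.
  have [i [ir Hi]] := @EG (r + k) (r - 2) (fun x y => [set x; y] \in E0) (ltac:(lia)) sym0 irr0 nm0.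
  by exists i; split.
split => [H1 H2 H3 | H1 H2 H3]; apply: NNPP => nog; case: (core nog) => [Hw|[r2 [i [ir Hi]]]].
- by move: H3; rewrite -/W ltnNge Hw.
- have HN : (r + k) * (r + k - 1) <= 2 * W + D E0 by rewrite -Dsum /W; lia.
  have [C _] := final_arith r2 rk ir Hi HN.
  by move: (C H1); rewrite leqNgt -/W H2.
- by move: H3; rewrite -/W ltnNge Hw.
- have HN : (r + k) * (r + k - 1) <= 2 * W + D E0 by rewrite -Dsum /W; lia.
  have [_ C] := final_arith r2 rk ir Hi HN.
  by move: (C H1); rewrite leqNgt -/W H2.
Qed.
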